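(* Let $n\geq 4$ and let $H$ be a Hamiltonian cycle in the complete bipartite graph $K_{n,n}$. Then $G=K_{n,n}-H$ (the graph on $V(K_{n,n})$ with edge set $E(K_{n,n})\setminus E(H)$) is $2$-swappable.
   Context: For a graph $G$, $A\subseteq E(G)$ and $B\subseteq E(\bar G)$ (edges of the complement of $G$ in the complete graph on $V(G)$), $G-A+B$ denotes the graph on $V(G)$ with edge set $(E(G)\setminus A)\cup B$. $G$ is $2$-swappable if for every $e\in E(G)$ there exist $A\subseteq E(G)$ and $B\subseteq E(\bar G)$ with $e\in A$, $|A|\leq 2$, and $G\cong G-A+B$. *)

(* Defs.v *)
(* Graphs are represented by their edge sets:
   an edge is a 2-element subset of the finite vertex type T. *)
From mathcomp Require Import all_boot all_fingroup.
Set Implicit Arguments. Unset Strict Implicit. Unset Printing Implicit Defensive.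

Section Graphs.
Variable T : finType.

Definition compl_edges (E : {set {set T}}) : {set {set T}} :=
  [set e : {set T} | (#|e| == 2) && (e \notin E)].

Definition swap_edges (E A B : {set {set T}}) : {set {set T}} :=
  (E :\: A) :|: B.

Definition graph_iso (E1 E2 : {set {set T}}) : Prop :=
  exists p : {perm T}, E2 = (fun e : {set T} => p @: e) @: E1.

Definition two_swappable (E : {set {set T}}) : Prop :=
  forall e, e \in E ->
    exists A B : {set {set T}},
      [/\ A \subset E, B \subset compl_edges E, e \in A, #|A| <= 2
        & graph_iso E (swap_edges E A B)].
End Graphs.

Definition Knn_vertex (n : nat) : finType := ('I_n + 'I_n)%type.

Definition Knn (n : nat) : {set {set Knn_vertex n}} :=
  [set [set (inl i : Knn_vertex n); inr j] | i : 'I_n, j : 'I_n].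

Definition hamiltonian_cycle (T : finType) (E H : {set {set T}}) : Prop :=
  exists s : seq T,
    [/\ uniq s, (forall x : T, x \in s), 3 <= size s,
        H = [set [set x; next s x] | x in s]
      & H \subset E].

(* Main.v *)
Require Import Defs.
From mathcomp Require Import all_boot all_fingroup zify.
Set Implicit Arguments. Unset Strict Implicit. Unset Printing Implicit Defensive.

Definition scm (m x : nat) := if x.+1 == m then 0 else x.+1.
Definition adjm (m a b : nat) := (b == scm m a) || (a == scm m b).
Definition sgk (k x : nat) := if (1 <= x) && (x <= k) then k.+1 - x else x.
Definition prij (i j a b : nat) := ((i == a) && (j == b)) || ((i == b) && (j == a)).

Section Gen.
Variables (T : finType) (side : T -> bool).

Definition Kset : {set {set T}} :=
  [set e | [exists x, exists y, (side x != side y) && (e == [set x; y])]].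

Lemma set2_eq (a b c d : T) : [set a; b] = [set c; d] ->
  (a = c /\ b = d) \/ (a = d /\ b = c).
Proof.
move=> E.
have ha : a \in [set c; d] by rewrite -E set21.
have hb : b \in [set c; d] by rewrite -E set22.
have hc : c \in [set a; b] by rewrite E set21.
have hd : d \in [set a; b] by rewrite E set22.
case/set2P: ha => ?; case/set2P: hb => ?; subst; try by auto.
- by move: hd => /set2P [] ?; subst; auto.
- by move: hc => /set2P [] ?; subst; auto.
Qed.

Lemma imset_set2 (f : T -> T) (a b : T) : f @: [set a; b] = [set f a; f b].
Proof. by rewrite imsetU1 imset_set1. Qed.

Lemma mem_imset_invol (f : {set T} -> {set T}) (E : {set {set T}}) e :
  involutive f -> (e \in f @: E) = (f e \in E).
Proof.
move=> fK; apply/imsetP/idP => [[y yE ->]|h]; first by rewrite fK.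
by exists (f e); rewrite ?fK.
Qed.

End Gen.

Lemma idx_main m k i j : i < m -> j < m -> 3 <= k -> k + 3 <= m ->
 ~~ adjm m (sgk k i) (sgk k j) = (~~ adjm m i j && ~~ prij i j 0 k && ~~ prij i j 1 k.+1) || prij i j 0 1 || prij i j k k.+1.
Proof.
move=> hi hj hk hkm; rewrite /adjm /scm /sgk /prij.
case Hi: ((1 <= i) && (i <= k)); case Hj: ((1 <= j) && (j <= k));
repeat (case: ifP => ?); apply/idP/idP; lia.
Qed.


Section Main.
Variables (T : finType) (side : T -> bool) (u : T) (t : seq T) (H : {set {set T}}).
Let s := u :: t.
Let m := size s.
Hypothesis us : uniq s.
Hypothesis alls : forall x, x \in s.
Hypothesis hm : 3 <= m.
Hypothesis hside : forall x, side (next s x) != side x.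
Hypothesis HH : H = [set [set x; next s x] | x in s].

Let w i := nth u s i.

Lemma w_index x : w (index x s) = x.
Proof. by rewrite /w nth_index. Qed.

Lemma index_lt x : index x s < m.
Proof. by rewrite /m index_mem. Qed.

Lemma index_w i : i < m -> index (w i) s = i.
Proof. by move=> hi; rewrite /w index_uniq. Qed.

Lemma w_eq i j : i < m -> j < m -> (w i == w j) = (i == j).
Proof. by move=> hi hj; rewrite /w nth_uniq. Qed.

Lemma next_w i : i < m -> next s (w i) = w (scm m i).
Proof.
move=> hi; rewrite next_nth mem_nth // index_w // /s /scm.
case: ifP => [/eqP hE|hN] /=.
  by rewrite nth_default // -ltnS; move: hE; rewrite /m /s /= => ->.
by [].
Qed.

Lemma side_w i : i < m -> side (w i) = side u (+) odd i.
Proof.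
elim: i => [|i IH] hi; first by rewrite addbF.
have hi' : i < m by apply: ltnW.
have := hside (w i); rewrite next_w // /scm.
have -> : (i.+1 == m) = false by apply/negbTE; rewrite neq_ltn hi.
rewrite IH //=; by case: (side (w i.+1)); case: (side u); case: (odd i).
Qed.

Lemma m_even : odd m = false.
Proof.
have hm0 : 0 < m by lia.
have hm1 : m.-1 < m by lia.
have hsc : scm m m.-1 = 0 by rewrite /scm prednK // eqxx.
have ho : odd m = ~~ odd m.-1 by rewrite -{1}(prednK hm0).
have := hside (w m.-1); rewrite next_w // hsc (side_w hm1) ho /w /=.
by case: (side u); case: (odd m.-1).
Qed.

Lemma scm_lt i : i < m -> scm m i < m.
Proof. by rewrite /scm; case: eqP => /= ? ?; lia. Qed.

Lemma set2_w_eq a b c d : a < m -> b < m -> c < m -> d < m ->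
  ([set w a; w b] == [set w c; w d]) = prij a b c d.
Proof.
move=> ha hb hc hd; apply/eqP/orP.
- move/set2_eq => [[/eqP h1 /eqP h2]|[/eqP h1 /eqP h2]];
  rewrite !w_eq // in h1 h2; [left|right]; by rewrite h1 h2.
- by case=> /andP [/eqP -> /eqP ->] //; rewrite setUC.
Qed.

Lemma H_w a b : a < m -> b < m -> ([set w a; w b] \in H) = adjm m a b.
Proof.
move=> ha hb; rewrite HH; apply/imsetP/orP.
- case=> x _; rewrite -(w_index x) next_w ?index_lt //.
  have hc := index_lt x; have hc' := scm_lt hc.
  move/set2_eq => [[/eqP h1 /eqP h2]|[/eqP h1 /eqP h2]];
  rewrite !w_eq // in h1 h2; [left|right]; by rewrite (eqP h1) (eqP h2).
- case=> /eqP ->; first by exists (w a) => //; rewrite next_w.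
  by exists (w b) => //; rewrite next_w // setUC.
Qed.

Lemma Kset_w a b : a < m -> b < m -> odd a != odd b -> [set w a; w b] \in Kset side.
Proof.
move=> ha hb h; rewrite inE; apply/existsP; exists (w a); apply/existsP; exists (w b).
rewrite eqxx andbT !side_w //.
by move: h; case: (side u); case: (odd a); case: (odd b).
Qed.

Lemma gen_swap v : side u != side v -> [set u; v] \notin H ->
  exists A B : {set {set T}},
    [/\ A \subset Kset side :\: H, B \subset compl_edges (Kset side :\: H),
        [set u; v] \in A, #|A| <= 2
      & graph_iso (Kset side :\: H) (swap_edges (Kset side :\: H) A B)].
Proof.
move=> huv hnH.
pose k := index v s.
have hk : k < m := index_lt v.
have hv : v = w k by rewrite w_index.
have hu : u = w 0 by [].
have oddk : odd k.
  by move: huv; rewrite hv (side_w hk) hu /w /=; case: (side u); case: (odd k).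
have hadj : adjm m 0 k = false by apply/negbTE; rewrite -H_w // -hu -hv; lia.
have hme := m_even.
have [k3 km3] : 3 <= k /\ k + 3 <= m.
  have k0 : k != 0 by apply/eqP => k0; rewrite k0 in oddk.
  have k2 : k != 2 by apply/eqP => k2; rewrite k2 in oddk.
  have km2 : k.+2 != m by apply/eqP => km2; rewrite -km2 /= oddk in hme.
  move: hadj; rewrite /adjm /scm.
  case: ifP => h1; case: ifP => h2 /=; lia.
pose sg := sgk k.
have sg_lt i : i < m -> sg i < m by rewrite /sg /sgk; case: ifP => ? ?; lia.
have sg_sg i : i < m -> sg (sg i) = i.
  move=> hi; rewrite /sg /sgk.
  case H1: ((1 <= i) && (i <= k)); repeat (case: ifP => ?); lia.
have odd_sg i : i < m -> odd (sg i) = odd i.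
  move=> hi; rewrite /sg /sgk; case: ifP => // /andP [_ hik].
  by rewrite oddB ?leqW //= oddk.
pose p0 x := w (sg (index x s)).
have p0w i : i < m -> p0 (w i) = w (sg i) by move=> hi; rewrite /p0 index_w.
have p0K : involutive p0.
  move=> x; rewrite -{2}(w_index x) /p0 index_w ?sg_lt ?index_lt //.
  by rewrite sg_sg ?index_lt.
have side_p0 x : side (p0 x) = side x.
  rewrite -{2}(w_index x) /p0 !side_w ?sg_lt ?index_lt //.
  by rewrite odd_sg ?index_lt.
pose F (e : {set T}) := p0 @: e.
have FK : involutive F.
  move=> e; rewrite /F -imset_comp.
  have -> : [set (p0 \o p0) x | x in e] = [set x | x in e].
    by apply: eq_imset => x /=; rewrite p0K.
  exact: imset_id.
have Kset_F e : e \in Kset side -> F e \in Kset side.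
  rewrite !inE => /existsP [x /existsP [y /andP [hxy /eqP ->]]].
  apply/existsP; exists (p0 x); apply/existsP; exists (p0 y).
  by rewrite /F imset_set2 !side_p0 hxy eqxx.
have hk1 : k.+1 < m by lia.
have h0m : 0 < m by lia.
have h1m : 1 < m by lia.
have hadj1 : adjm m 1 k.+1 = false.
  by rewrite /adjm /scm; repeat (case: ifP => ?); apply/negbTE; lia.
have hadj01 : adjm m 0 1 by rewrite /adjm /scm; case: ifP => ? /=; lia.
have hadjk : adjm m k k.+1 by rewrite /adjm /scm; case: ifP => ? /=; lia.
have oddk1 : odd k.+1 = false by rewrite /= oddk.
exists [set [set w 0; w k]; [set w 1; w k.+1]], [set [set w 0; w 1]; [set w k; w k.+1]].
split.
- apply/subsetP => f; rewrite in_set2 => /orP [] /eqP ->; rewrite in_setD H_w // Kset_w //.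
  + by rewrite hadj.
  + by rewrite oddk.
  + by rewrite hadj1.
  + by rewrite oddk1.
- apply/subsetP => f; rewrite in_set2 => /orP [] /eqP ->;
  rewrite /compl_edges in_set cards2 w_eq // in_setD H_w //.
  + by rewrite hadj01.
  + rewrite hadjk /=; apply/eqP; lia.
- by rewrite hu hv set21.
- by rewrite cards2; case: (_ != _).
exists (perm (can_inj p0K)).
have eqF : (fun e : {set T} => perm (can_inj p0K) @: e) =1 F.
  by move=> f; apply: eq_imset; exact: permE.
rewrite (eq_imset _ eqF); apply/setP => e.
rewrite mem_imset_invol //.
case/boolP: (e \in Kset side) => He.
- have [x [y [hxy ee]]] : exists x y, side x != side y /\ e = [set x; y].
    by move: He; rewrite inE => /existsP [x /existsP [y /andP [hxy /eqP ee]]]; exists x, y.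
  have HF := Kset_F _ He.
  rewrite ee -(w_index x) -(w_index y) in HF He *.
  have hi := index_lt x; have hj := index_lt y.
  move: (index x s) (index y s) hi hj HF He => i j hi hj.
  rewrite /F imset_set2 !p0w // => HF He'.
  rewrite /swap_edges in_setU !in_setD in_set2 HF.
  rewrite !in_set2 !set2_w_eq // !H_w ?sg_lt //.
  rewrite He' idx_main //.
  by case: (adjm m i j); case: (prij i j 0 k); case: (prij i j 1 k.+1);
     case: (prij i j 0 1); case: (prij i j k k.+1).
- have HF : F e \notin Kset side.
    by apply/negP => /Kset_F; rewrite FK; apply/negP.
  rewrite /swap_edges in_setU !in_setD (negbTE He) (negbTE HF) !andbF /=.
  apply/negbTE; rewrite in_set2; apply/norP; split; apply/negP => /eqP ee;
  move: He; rewrite ee Kset_w //.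
  by rewrite oddk1 oddk.
Qed.

End Main.


Definition sideK (n : nat) (x : Knn_vertex n) : bool := if x is inl _ then true else false.

Lemma KnnE n : Knn n = Kset (@sideK n).
Proof.
apply/setP => e; rewrite inE; apply/imset2P/existsP.
- case=> i j _ _ ->; exists (inl i); apply/existsP; exists (inr j) => //=.
- case=> x /existsP [y /andP [hxy /eqP ->]].
  case: x hxy => [i|i]; case: y => [j|j] //= _.
  + by exists i j.
  + by exists j i => //; rewrite setUC.
Qed.

Theorem mainTheorem6 (n : nat) (H : {set {set Knn_vertex n}}) :
  4 <= n -> hamiltonian_cycle (Knn n) H ->
  two_swappable (Knn n :\: H).
Proof.
move=> hn [s [us alls hs HE Hsub]] e.
rewrite KnnE in Hsub *.
case/setDP => heK heH.
have [x [y [hxy ee]]] : exists x y, sideK x != sideK y /\ e = [set x; y].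
  by move: heK; rewrite inE => /existsP [x /existsP [y /andP [hxy /eqP ee]]]; exists x, y.
case: (rot_to (alls x)) => i t ht.
have us' : uniq (x :: t) by rewrite -ht rot_uniq.
have alls' : forall z, z \in x :: t by move=> z; rewrite -ht mem_rot.
have hs' : 3 <= size (x :: t) by rewrite -ht size_rot.
have hside : forall z, sideK (next (x :: t) z) != sideK z.
  move=> z; rewrite -ht next_rot //.
  have : [set z; next s z] \in Kset (@sideK n).
    by apply: (subsetP Hsub); rewrite HE; apply: imset_f.
  rewrite inE => /existsP [a /existsP [b /andP [hab /eqP /set2_eq]]].
  by case=> [[-> ->]|[-> ->]] //; rewrite eq_sym.
have HH : H = [set [set z; next (x :: t) z] | z in x :: t].
  rewrite HE; apply/setP => f; apply/imsetP/imsetP => -[z _ ->]; exists z => //.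
  - by rewrite -ht next_rot.
  - by rewrite -ht next_rot.
have heH' : [set x; y] \notin H by rewrite -ee.
have [A [B [hA hB hAe hAc hiso]]] := gen_swap us' alls' hs' hside HH hxy heH'.
by exists A, B; split => //; rewrite ee.
Qed.
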